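(* Let $\varphi>0$, $w^{\max}>0$, $O^{\max}>0$, $S^{\max}>0$, $p_B^{\max}>0$, $\Delta p_B\ge 0$, $J^{\max}>0$ with $J^{\max}\ge p_B^{\max}+\Delta p_B$ and $O^{\max}\ge p_B^{\max}+\Delta p_B$. Set $\theta=\varphi V+O^{\max}$ with $$0<V\le\frac{S^{\max}-w^{\max}-O^{\max}}{\varphi}.$$ Consider the battery dynamics $S(t+1)=S(t)-O(t)+\delta(t)w(t)$, $t=0,1,2,\dots$, with $S(0)\in[0,S^{\max}]$, harvested energy $w(t)\in[0,w^{\max}]$, and let $p_B^*(t)\in[0,p_B^{\max}]$ be the base-station transmit power at slot $t$. Suppose at each slot the quantities $J(t)$ (grid energy), $O(t)$ (energy withdrawn from the battery) and $\delta(t)\in[0,1]$ are chosen by the rule: 1) if $S(t)\ge\theta-\varphi V$, then $J(t)=0$, $O(t)=\min\{p_B^*(t)+\Delta p_B,O^{\max}\}$, and $\delta(t)=1$ if $0\le S(t)<\theta$, $\delta(t)=0$ otherwise; 2) if $S(t)<\theta-\varphi V$, then $J(t)=\min\{p_B^*(t)+\Delta p_B,J^{\max}\}$, $O(t)=\max\{0,p_B^*(t)+\Delta p_B-J(t)\}$, $\delta(t)=1$. Then $S(t)\in[0,S^{\max}]$ for all $t$.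
   Context: Setting: a base station powered by the grid and by a renewable source with a storage battery of capacity $S^{\max}$; $S(t)$ is the battery energy level, $w(t)$ the harvested renewable energy in slot $t$ (of which the fraction $\delta(t)$ is stored), $O(t)$ the energy drawn from the battery (maximum discharge rate $O^{\max}$), $J(t)$ the energy drawn from the grid for the BS, $\Delta p_B$ the static power consumption of the BS and $p_B^*(t)$ the BS transmit power chosen at slot $t$ by the resource allocation step (which satisfies the total power constraint $p_B^*(t)\le p_B^{\max}$). *)

(* Defs.v *)
From Stdlib Require Import Reals.
Open Scope R_scope.

Definition energy_rule (phi V Omax Jmax dpB : R)
  (s pB J O delta : R) : Prop :=
  let theta := phi * V + Omax in
  (s >= theta - phi * V ->
     J = 0 /\ O = Rmin (pB + dpB) Omax /\
     ((0 <= s /\ s < theta) -> delta = 1) /\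
     (~ (0 <= s /\ s < theta) -> delta = 0)) /\
  (s < theta - phi * V ->
     J = Rmin (pB + dpB) Jmax /\ O = Rmax 0 (pB + dpB - J) /\ delta = 1).

(* Main.v *)
Require Import Defs.
From Stdlib Require Import Reals Lra.
Open Scope R_scope.

Theorem theorem2
  (phi wmax Omax Smax pBmax dpB Jmax V : R)
  (S w pB J O delta : nat -> R)
  (Hphi : 0 < phi) (Hwmax : 0 < wmax) (HOmax : 0 < Omax) (HSmax : 0 < Smax)
  (HpBmax : 0 < pBmax) (HdpB : 0 <= dpB) (HJmax : 0 < Jmax)
  (HJmax2 : Jmax >= pBmax + dpB) (HOmax2 : Omax >= pBmax + dpB)
  (HV0 : 0 < V) (HV1 : V <= (Smax - wmax - Omax) / phi)
  (HS0 : 0 <= S 0%nat <= Smax)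
  (Hw : forall t, 0 <= w t <= wmax)
  (HpB : forall t, 0 <= pB t <= pBmax)
  (Hdelta : forall t, 0 <= delta t <= 1)
  (Hrule : forall t, energy_rule phi V Omax Jmax dpB (S t) (pB t) (J t) (O t) (delta t))
  (Hdyn : forall t, S (Datatypes.S t) = S t - O t + delta t * w t) :
  forall t, 0 <= S t <= Smax.
Proof.
  assert (HpV : phi * V <= Smax - wmax - Omax).
  { apply Rmult_le_compat_l with (r:=phi) in HV1; [|lra].
    unfold Rdiv in HV1. rewrite (Rmult_comm (Smax - wmax - Omax)) in HV1.
    rewrite <- Rmult_assoc, Rinv_r, Rmult_1_l in HV1; lra. }
  assert (HpV0 : 0 < phi * V) by (apply Rmult_lt_0_compat; lra).
  induction t as [|t IH]; [exact HS0|].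
  rewrite Hdyn.
  destruct (Hrule t) as [R1 R2]. cbv zeta in R1, R2.
  specialize (Hw t). specialize (HpB t). specialize (Hdelta t).
  destruct (Rlt_dec (S t) (phi * V + Omax - phi * V)) as [Hlt|Hge].
  - destruct (R2 Hlt) as [HJ [HO Hd]].
    assert (J t = pB t + dpB).
    { rewrite HJ. unfold Rmin. destruct (Rle_dec (pB t + dpB) Jmax); lra. }
    assert (O t = 0).
    { rewrite HO. unfold Rmax. destruct (Rle_dec 0 (pB t + dpB - J t)); lra. }
    rewrite Hd. lra.
  - assert (Hge' : S t >= phi * V + Omax - phi * V) by lra.
    destruct (R1 Hge') as [HJ [HO [Hd1 Hd2]]].
    assert (O t = pB t + dpB).
    { rewrite HO. unfold Rmin. destruct (Rle_dec (pB t + dpB) Omax); lra. }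
    destruct (Rlt_dec (S t) (phi * V + Omax)) as [Hl|Hn].
    + rewrite (Hd1 (conj (proj1 IH) Hl)). lra.
    + rewrite Hd2 by (intros [_ ?]; lra). lra.
Qed.
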